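(* Let $q$ be a prime power, $m>1$ an integer, and $k\ge 1$ an integer. For $1\le i\le k$, let $\gamma_i\in \mathbf{F}_{q^m}$ and let $L_i(x)\in \mathbf{F}_q[x]$ and $B(x)\in\mathbf{F}_q[x]$ be linearized polynomials. Let $h_i(x)\in \mathbf{F}_{q^m}[x]$ be such that $h_i(B(\mathbf{F}_{q^m}))\subseteq \mathbf{F}_q$ for each $i$. Then $$F(x):=\sum_{i=1}^k\bigl(L_i(x)+\gamma_i\bigr)h_i(B(x))$$ is a permutation polynomial of $\mathbf{F}_{q^m}$ if and only if both of the following hold: (1) the polynomial $\sum_{i=1}^k\bigl(L_i(x)+B(\gamma_i)\bigr)h_i(x)$ permutes the set $B(\mathbf{F}_{q^m})$; (2) for every $y\in B(\mathbf{F}_{q^m})$, an element $x\in\mathbf{F}_{q^m}$ satisfies both $\sum_{i=1}^k L_i(x)h_i(y)=0$ and $B(x)=0$ if and only if $x=0$.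
   Context: A linearized polynomial over a field $K\supseteq\mathbf{F}_q$ (here with coefficients in $\mathbf{F}_q$) is a polynomial of the form $\sum_{i=0}^{m-1}a_i x^{q^i}$. For a polynomial $g$ and $S\subseteq\mathbf{F}_{q^m}$, $g(S)=\{g(s):s\in S\}$. A polynomial $f\in\mathbf{F}_{q^m}[x]$ is a permutation polynomial of $\mathbf{F}_{q^m}$ if $x\mapsto f(x)$ is a bijection of $\mathbf{F}_{q^m}$; a polynomial permutes a set $S$ if it maps $S$ bijectively onto $S$. *)

(* Defs.v *)
From HB Require Import structures.
From mathcomp Require Import all_boot all_order all_algebra all_field.
Set Implicit Arguments. Unset Strict Implicit. Unset Printing Implicit Defensive.
Import GRing.Theory.
Local Open Scope ring_scope.

(* The subfield F_q of a finite field K with #|K| = q^m: the elements fixed by x |-> x^q. *)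
Definition Fq (K : finFieldType) (q : nat) : pred K := fun x => x ^+ q == x.

Definition linearized (K : finFieldType) (q m : nat) (p : {poly K}) : Prop :=
  exists a : 'I_m -> K, (forall i, a i \in @Fq K q) /\
    p = \sum_(i < m) a i *: 'X^(q ^ i).

Definition img (K : finFieldType) (g : {poly K}) (S : {set K}) : {set K} :=
  [set g.[s] | s in S].

Definition perm_poly (K : finFieldType) (f : {poly K}) : Prop :=
  bijective (fun x : K => f.[x]).

Definition permutes_set (K : finFieldType) (g : {poly K}) (S : {set K}) : Prop :=
  [/\ {in S, forall x, g.[x] \in S},
      {in S &, injective (fun x => g.[x])} &
      {in S, forall y, exists2 x, x \in S & g.[x] = y}].

(* Main.v *)
Require Import Defs.
From HB Require Import structures.
From mathcomp Require Import all_boot all_order all_algebra all_field.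
Import GRing.Theory.
Local Open Scope ring_scope.
Set Implicit Arguments. Unset Strict Implicit.

Section Lin.
Variables (K : finFieldType) (q m : nat).
Hypothesis q0 : (0 < q)%N.
Hypothesis qadd : forall x y : K, (x + y) ^+ q = x ^+ q + y ^+ q.

Lemma frob_iter (x : K) j : x ^+ (q ^ j.+1) = (x ^+ (q ^ j)) ^+ q.
Proof. by rewrite expnSr exprM. Qed.

Lemma qjadd j (x y : K) : (x + y) ^+ (q ^ j) = x ^+ (q ^ j) + y ^+ (q ^ j).
Proof. elim: j => [|j IH]; first by rewrite !expr1. by rewrite !frob_iter IH qadd. Qed.

Lemma qjFq j (c : K) : c \in Fq q -> c ^+ (q ^ j) = c.
Proof. move=> /eqP Hc; elim: j => [|j IH]; first by rewrite expr1. by rewrite frob_iter IH Hc. Qed.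

Lemma lin_eval (L : {poly K}) : linearized q m L ->
  exists2 a : 'I_m -> K, (forall i, a i \in Fq q) &
    forall x, L.[x] = \sum_(i < m) a i * x ^+ (q ^ i).
Proof.
move=> [a [Ha ->]]; exists a => // x.
rewrite horner_sum; apply: eq_bigr => i _; by rewrite hornerZ hornerXn.
Qed.

Variable L : {poly K}.
Hypothesis HL : linearized q m L.

Lemma linD x y : L.[x + y] = L.[x] + L.[y].
Proof.
have [a _ E] := lin_eval HL; rewrite !E -big_split /=; apply: eq_bigr => i _.
by rewrite qjadd mulrDr.
Qed.

Lemma lin0 : L.[0] = 0.
Proof. symmetry; apply: (@addrI _ L.[0]); by rewrite addr0 -linD addr0. Qed.

Lemma linN x : L.[- x] = - L.[x].
Proof. by apply/eqP; rewrite -addr_eq0 -linD addNr lin0. Qed.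

Lemma linB x y : L.[x - y] = L.[x] - L.[y].
Proof. by rewrite linD linN. Qed.

Lemma linZ c x : c \in Fq q -> L.[c * x] = c * L.[x].
Proof.
move=> Hc; have [a _ E] := lin_eval HL; rewrite !E mulr_sumr; apply: eq_bigr => i _.
by rewrite exprMn qjFq // mulrCA.
Qed.

Lemma qsum (I : Type) (r : seq I) (F : I -> K) :
  (\sum_(i <- r) F i) ^+ q = \sum_(i <- r) F i ^+ q.
Proof. apply: (big_morph (fun z => z ^+ q) qadd); by rewrite expr0n (gtn_eqF q0). Qed.

Lemma linq x : L.[x ^+ q] = L.[x] ^+ q.
Proof.
have [a Ha E] := lin_eval HL; rewrite !E qsum; apply: eq_bigr => i _.
by rewrite exprMn (eqP (Ha i)) -!exprM mulnC.
Qed.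

Lemma linX j x : L.[x ^+ (q ^ j)] = L.[x] ^+ (q ^ j).
Proof.
elim: j => [|j IH]; first by rewrite !expr1.
by rewrite !frob_iter linq IH.
Qed.

Lemma linsum (I : Type) (r : seq I) (F : I -> K) :
  L.[\sum_(i <- r) F i] = \sum_(i <- r) L.[F i].
Proof. exact: (big_morph _ linD lin0). Qed.

End Lin.

Lemma lin_comm (K : finFieldType) (q m : nat) (q0 : (0 < q)%N)
  (qadd : forall x y : K, (x + y) ^+ q = x ^+ q + y ^+ q) (L B : {poly K}) :
  linearized q m L -> linearized q m B -> forall x, B.[L.[x]] = L.[B.[x]].
Proof.
move=> HL HB x; have [b Hb E] := lin_eval HB.
rewrite !E (linsum qadd HL); apply: eq_bigr => j _.
by rewrite (linZ HL) // (linX q0 qadd HL).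
Qed.

Lemma onto_inj (T : finType) (S : {set T}) (g : T -> T) :
  {in S, forall x, g x \in S} -> {in S, forall y, exists2 x, x \in S & g x = y} ->
  {in S &, injective g}.
Proof.
move=> H1 H2; apply/imset_injP.
have -> : g @: S = S.
  apply/eqP; rewrite eqEsubset; apply/andP; split.
    by apply/subsetP => z /imsetP [x Hx ->]; apply: H1.
  by apply/subsetP => y Hy; have [x Hx <-] := H2 y Hy; apply: imset_f.
by [].
Qed.

Unset Implicit Arguments.
Theorem theorem2p1 (K : finFieldType) (q m k : nat)
  (Hq : exists p n : nat, [/\ prime p, (0 < n)%N & q = (p ^ n)%N])
  (HK : #|K| = (q ^ m)%N) (Hm : (1 < m)%N) (Hk : (1 <= k)%N)
  (gamma : 'I_k -> K) (L h : 'I_k -> {poly K}) (B : {poly K})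
  (HL : forall i, linearized q m (L i)) (HB : linearized q m B)
  (Hh : forall i, {subset img (h i) (img B [set: K]) <= @Fq K q}) :
  perm_poly (\sum_(i < k) (L i + (gamma i)%:P) * (h i \Po B)) <->
  (permutes_set (\sum_(i < k) (L i + (B.[gamma i])%:P) * h i) (img B [set: K]) /\
   forall y, y \in img B [set: K] -> forall x : K,
     ((\sum_(i < k) (L i).[x] * (h i).[y] == 0) && (B.[x] == 0)) <-> x = 0).
Proof.
have [p [n [pp n0 qE]]] := Hq.
have pch : p \in [pchar K].
  by apply: (card_finPcharP (n := (n * m)%N)) => //; rewrite HK qE expnM.
have q0 : (0 < q)%N by rewrite qE expn_gt0 prime_gt0.
have qadd : forall x y : K, (x + y) ^+ q = x ^+ q + y ^+ q.
  move=> x y; apply: exprDn_pchar; rewrite qE pnatX (eq_pnat _ (pcharf_eq pch)).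
  by rewrite pnat_id.
set F := \sum_(i < k) _. set G := \sum_(i < k) _. set S := img B [set: K].
have inS : forall x, B.[x] \in S by move=> x; apply: imset_f; rewrite inE.
have cFq : forall i x, (h i).[B.[x]] \in Fq q.
  by move=> i x; apply: (Hh i); apply: imset_f.
have Fev : forall x, F.[x] = \sum_(i < k) ((L i).[x] + gamma i) * (h i).[B.[x]].
  move=> x; rewrite /F horner_sum; apply: eq_bigr => i _.
  by rewrite hornerM hornerD hornerC horner_comp.
have Gev : forall y, G.[y] = \sum_(i < k) ((L i).[y] + B.[gamma i]) * (h i).[y].
  move=> y; rewrite /G horner_sum; apply: eq_bigr => i _.
  by rewrite hornerM hornerD hornerC.
have key : forall x, B.[F.[x]] = G.[B.[x]].
  move=> x; rewrite Fev Gev (linsum qadd HB); apply: eq_bigr => i _.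
  rewrite mulrC (linZ HB) ?cFq // (linD qadd HB) (lin_comm q0 qadd (HL i) HB).
  by rewrite mulrC.
have diff : forall x x', B.[x] = B.[x'] ->
    F.[x] - F.[x'] = \sum_(i < k) (L i).[x - x'] * (h i).[B.[x]].
  move=> x x' Exx; rewrite !Fev Exx -sumrB; apply: eq_bigr => i _.
  rewrite -mulrBl (linB qadd (HL i)); congr (_ * _).
  by rewrite opprD addrACA subrr addr0.
split.
- move=> [f' Hc1 Hc2].
  have Hin : {in S, forall y, G.[y] \in S}.
    by move=> y /imsetP [x _ ->]; rewrite -key.
  have Hon : {in S, forall y, exists2 x, x \in S & G.[x] = y}.
    move=> y /imsetP [w _ ->]; exists B.[f' w] => //.
    by rewrite -key Hc2.
  split; first by split => //; apply: onto_inj.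
  move=> y /imsetP [x0 _ ->] x; split.
  + case/andP => /eqP Hs /eqP Hb.
    have Bx : B.[x0 + x] = B.[x0] by rewrite (linD qadd HB) Hb addr0.
    have := diff _ _ Bx; rewrite Bx [x0 + x]addrC addrK Hs => /eqP.
    rewrite subr_eq0 => /eqP /(can_inj Hc1) E.
    by have := congr1 (fun z => z - x0) E; rewrite /= addrK subrr.
  + move=> ->; rewrite (lin0 qadd HB) eqxx andbT.
    by rewrite big1 // => i _; rewrite (lin0 qadd (HL i)) mul0r.
- move=> [[Hg1 Hg2 Hg3] H2]; apply: injF_bij => x x' HF.
  have Bx : B.[x] = B.[x'].
    by apply: Hg2; rewrite ?inS //= -!key HF.
  have := diff _ _ Bx; rewrite HF subrr => /esym /eqP Hs.
  have Hb : B.[x - x'] == 0 by rewrite (linB qadd HB) Bx subrr.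
  have := (H2 _ (inS x) (x - x')).1; rewrite Hs Hb => /(_ isT) /eqP.
  by rewrite subr_eq0 => /eqP.
Qed.
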